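(* Let $\mathcal N$ and $\mathcal M$ be quantum channels satisfying $s$-detailed balance with respect to $\rho_\beta$, with $\mathcal N$ having $\rho_\beta$ as unique fixed state and spectrum in $[0,1]$. Run the single-trajectory algorithm with initial state $\rho_\beta$ and $T_{burn}=0$, and let $v=\mathbb E_{\rho_\beta}(\mathcal M)$. Then for all integers $t,p>0$ with $t+p\le K$, $$\mathbb E_{\rho_\beta}\big[(e_t-v)(e_{t+p}-v)\big]=\sum_{j\ge2}\alpha_{1j}\alpha_{j1}\lambda_j^{p-1}.$$
   Context: $H$ is an $n$-qubit Hermitian operator, $\beta>0$, $\rho_\beta=e^{-\beta H}/\operatorname{tr}(e^{-\beta H})$. $\mathcal T^\dagger$ is the Hilbert–Schmidt adjoint of a linear map (for a channel with Kraus $K_u$, $\mathcal T^\dagger(X)=\sum_uK_u^\dagger XK_u$). $\langle A,B\rangle_s=\operatorname{tr}(A^\dagger\rho_\beta^{1-s}B\rho_\beta^s)$; a map satisfies $s$-detailed balance if $\langle A,\mathcal T^\dagger(B)\rangle_s=\langle\mathcal T^\dagger(A),B\rangle_s$ for all $A,B$. $\mathcal M$ has Kraus operators $\{O_u\}_u$ indexed by finitely many real outcomes $u$. $\mathbb E_{\rho_\beta}(\mathcal M)=\sum_uu\operatorname{tr}(O_u\rho_\beta O_u^\dagger)$, $\widehat{\mathcal M}(X)=\sum_u(u-\mathbb E_{\rho_\beta}(\mathcal M))O_uXO_u^\dagger$, $\mathcal E=\mathcal M\circ\mathcal N\circ\mathcal M$, $\widehat{\mathcal E}=\mathcal M\circ\mathcal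 N\circ\widehat{\mathcal M}$. $\{Y_i\}_i$ is a $\langle\cdot,\cdot\rangle_s$-orthonormal basis of matrices with $\mathcal E^\dagger(Y_i)=\lambda_iY_i$, $1=\lambda_1>\lambda_2\ge\dots\ge0$, $Y_1=I$; $\alpha_{ij}=\langle Y_j,\widehat{\mathcal E}^\dagger(Y_i)\rangle_s$. Single-trajectory algorithm: starting from the given initial state, apply $\mathcal N$ $T_{burn}$ times, then for $t=1,\dots,K$ apply $\mathcal M$ (record outcome $e_t$), then $\mathcal N$, then $\mathcal M$ (outcome discarded). $\mathbb E_{\rho_\beta}$ is expectation over this process started from $\rho_\beta$. *)

(* Defs.v *)
From mathcomp Require Import all_boot all_order all_algebra.
From mathcomp Require Import all_classical all_reals all_analysis.
From mathcomp Require Import complex.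
Set Implicit Arguments.
Unset Strict Implicit.
Unset Printing Implicit Defensive.
Import Order.TTheory GRing.Theory Num.Theory numFieldNormedType.Exports.
Local Open Scope ring_scope.
Local Open Scope complex_scope.

Section QDefs.
Variable R : realType.

Definition qdim (n : nat) : nat := (2 ^ n)%N.

Lemma qdim2_gt0 n : (0 < qdim n * qdim n)%N.
Proof. by rewrite muln_gt0 /qdim expn_gt0. Qed.

(* first index (the paper's index 1) of the eigenbasis *)
Definition idx0 n : 'I_(qdim n * qdim n) := Ordinal (qdim2_gt0 n).

Variable d : nat.
Notation mx := 'M[R[i]]_d.

Definition mxadj (p q : nat) (A : 'M[R[i]]_(p, q)) : 'M[R[i]]_(q, p) :=
  \matrix_(i, j) (A j i)^*.

Definition mxpow (A : mx) (k : nat) : mx := iter k (mulmx A) 1%:M.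

Definition expm (A : mx) : mx :=
  \matrix_(i, j)
    (limn (fun N : nat =>
       (((\sum_(k < N) (k`!%:R)^-1 *: mxpow A k) i j) : (R[i])^o)) : R[i]).

Definition herm_mx (A : mx) : Prop := mxadj A = A.

Definition psd (A : mx) : Prop :=
  herm_mx A /\ forall v : 'cV[R[i]]_d, 0 <= (mxadj v *m A *m v) 0 0.

Definition density (A : mx) : Prop := psd A /\ \tr A = 1.

Definition gibbsZ (H : mx) (beta : R) : R[i] := \tr (expm (- beta%:C *: H)).

Definition gibbs (H : mx) (beta : R) : mx := (gibbsZ H beta)^-1 *: expm (- beta%:C *: H).

Definition gibbs_pow (H : mx) (beta s : R) : mx :=
  ((powR (complex.Re (gibbsZ H beta)) s)^-1)%:C *: expm (- (s * beta)%:C *: H).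

Definition ip_s (H : mx) (beta s : R) (A B : mx) : R[i] :=
  \tr (mxadj A *m gibbs_pow H beta (1 - s) *m B *m gibbs_pow H beta s).

Definition kraus (a : nat) (K : 'I_a -> mx) (X : mx) : mx :=
  \sum_(u < a) (K u *m X *m mxadj (K u)).
Definition kraus_adj (a : nat) (K : 'I_a -> mx) (X : mx) : mx :=
  \sum_(u < a) (mxadj (K u) *m X *m K u).

Definition trace_preserving (a : nat) (K : 'I_a -> mx) : Prop :=
  \sum_(u < a) (mxadj (K u) *m K u) = 1%:M.

Definition detailed_balance (H : mx) (beta s : R) (Tadj : mx -> mx) : Prop :=
  forall A B : mx, ip_s H beta s A (Tadj B) = ip_s H beta s (Tadj A) B.

Definition expM (m : nat) (O : 'I_m -> mx) (lab : 'I_m -> R) (rho : mx) : R[i] :=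
  \sum_(u < m) (lab u)%:C * \tr (O u *m rho *m mxadj (O u)).

(* adjoint of  Mhat(X) = sum_u (u - v) O_u X O_u^dag *)
Definition Mhat_adj (m : nat) (O : 'I_m -> mx) (lab : 'I_m -> R) (v : R[i]) (X : mx) : mx :=
  \sum_(u < m) (((lab u)%:C - v)^* *: (mxadj (O u) *m X *m O u)).

(* one round of the single-trajectory algorithm with recorded outcome e:
   M (outcome e), then N, then M (outcome discarded); unnormalized state *)
Definition traj_step (a m : nat) (KN : 'I_a -> mx) (O : 'I_m -> mx) (e : 'I_m) (X : mx) : mx :=
  kraus O (kraus KN (O e *m X *m mxadj (O e))).

Definition traj (a m : nat) (KN : 'I_a -> mx) (O : 'I_m -> mx) (es : seq 'I_m) (X : mx) : mx :=
  foldl (fun Y e => traj_step KN O e Y) X es.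

(* E[(e_t - v)(e_{t+p} - v)] over the outcome record (e_1..e_K), T_burn = 0,
   started from rho; probability of a record es is tr(traj es rho) *)
Definition corr (a m : nat) (KN : 'I_a -> mx) (O : 'I_m -> mx) (lab : 'I_m -> R)
    (rho : mx) (v : R[i]) (K t p : nat) : R[i] :=
  \sum_(f : {ffun 'I_K -> 'I_m})
    let es := [seq f i | i <- enum 'I_K] in
    let ls := [seq lab e | e <- es] in
    ((nth 0 ls t.-1)%:C - v) * ((nth 0 ls (t + p).-1)%:C - v) * \tr (traj KN O es rho).

End QDefs.

(* Main.v *)
Require Import Defs.
From mathcomp Require Import all_boot all_order all_algebra.
From mathcomp Require Import all_classical all_reals all_analysis.
From mathcomp Require Import complex.
From mathcomp Require Import zify.
Set Implicit Arguments.
Unset Strict Implicit.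
Unset Printing Implicit Defensive.
Import Order.TTheory GRing.Theory Num.Theory numFieldNormedType.Exports.
Local Open Scope ring_scope.
Local Open Scope complex_scope.
Section Adj.
Variable R : realType.
Variable d : nat.
Notation mx := 'M[R[i]]_d.
Implicit Types A B X : mx.

Lemma mxadj_mul p q r (A : 'M[R[i]]_(p, q)) (B : 'M[R[i]]_(q, r)) :
  mxadj (A *m B) = mxadj B *m mxadj A.
Proof.
apply/matrixP => i j; rewrite !mxE rmorph_sum; apply: eq_bigr => k _.
by rewrite !mxE rmorphM mulrC.
Qed.

Lemma mxadjK p q (A : 'M[R[i]]_(p, q)) : mxadj (mxadj A) = A.
Proof. by apply/matrixP => i j; rewrite !mxE conjcK. Qed.

Lemma mxadj1 : mxadj (1%:M : mx) = 1%:M.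
Proof.
apply/matrixP => i j; rewrite !mxE.
by rewrite eq_sym conjc_nat.
Qed.

Lemma mxadjD p q (A B : 'M[R[i]]_(p, q)) : mxadj (A + B) = mxadj A + mxadj B.
Proof. by apply/matrixP => i j; rewrite !mxE rmorphD. Qed.

Lemma mxadjZ p q c (A : 'M[R[i]]_(p, q)) : mxadj (c *: A) = c^* *: mxadj A.
Proof. by apply/matrixP => i j; rewrite !mxE rmorphM. Qed.

Lemma mxtrace_adj A : \tr (mxadj A) = (\tr A)^*.
Proof. by rewrite /mxtrace rmorph_sum; apply: eq_bigr => i _; rewrite mxE. Qed.

Lemma trace_delta A (i j : 'I_d) : \tr (A *m delta_mx j i) = A i j.
Proof.
rewrite /mxtrace (bigD1 i) //= big1 ?addr0.
  rewrite mxE (bigD1 j) //= big1 ?addr0 ?mxE ?eqxx ?mulr1 //.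
  by move=> k /negbTE nkj; rewrite mxE nkj mulr0.
move=> k nki; rewrite mxE big1 // => l _; rewrite mxE (negbTE nki) andbF mulr0 //.
Qed.

Lemma trace_inj A B : (forall X, \tr (A *m X) = \tr (B *m X)) -> A = B.
Proof. by move=> h; apply/matrixP => i j; rewrite -!(trace_delta _ i j). Qed.

End Adj.
Section Spec.
Variable R : realType.
Variable d : nat.
Notation mx := 'M[R[i]]_d.

Lemma mxadjE (A : mx) : mxadj A = map_mx Num.conj (trmx A).
Proof. by apply/matrixP => i j; rewrite !mxE. Qed.

Lemma herm_decomp (H : mx) : herm_mx H ->
  exists (U : mx) (r : 'I_d -> R),
    [/\ mxadj U *m U = 1%:M, U *m mxadj U = 1%:M &
        H = mxadj U *m diag_mx (\row_l (r l)%:C) *m U].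
Proof.
move=> hH.
have hs : H \is hermsymmx.
  by apply/is_hermitianmxP; rewrite expr0 scale1r -mxadjE hH.
have /orthomx_spectralP hD := hermitian_normalmx hs.
have uP := spectral_unitarymx H.
have hreal := hermitian_spectral_diag_real hs.
move: (spectralmx H) (spectral_diag H) hD uP hreal => U sp hD uP hreal.
have hUU : U *m mxadj U = 1%:M by rewrite mxadjE; apply/unitarymxP.
have hUU' : mxadj U *m U = 1%:M by apply: mulmx1C.
have hI : invmx U = mxadj U by rewrite invmx_unitary // mxadjE.
exists U, (fun l => complex.Re (sp 0 l)).
have -> : diag_mx (\row_l (complex.Re (sp 0 l))%:C) = diag_mx sp.
  congr diag_mx; apply/rowP => l; rewrite mxE.
  by apply: RRe_real; move/mxOverP: hreal; apply.
split; [exact: hUU' | exact: hUU |].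
by rewrite -hI.
Qed.
End Spec.
Section Cvg.
Variable R : realType.
Local Open Scope classical_set_scope.

Lemma normcR (x : R) : `|x%:C| = `|x|%:C :> R[i].
Proof. by rewrite normc_def /= expr0n /= addr0 sqrtr_sqr. Qed.

Lemma cvg_RC (u : nat -> R) (l : R) :
  u @ \oo --> l -> (fun N => ((u N)%:C : (R[i])^o)) @ \oo --> ((l%:C : R[i]) : (R[i])^o).
Proof.
move=> /cvgrPdist_lt hu; apply/cvgrPdist_lt => e e0.
have e0' : 0 < complex.Re e by move: e0; rewrite ltcE => /andP[].
have eE : e = (complex.Re e)%:C.
  move: e0; rewrite ltcE => /andP[/eqP hI _].
  by case: e hI {e0'} => a b /= ->.
near=> N.
rewrite eE -rmorphB normcR ltcR.
near: N. exact: hu.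
Unshelve. all: by end_near.
Qed.

Lemma limn_ext_cvg (u : nat -> (R[i])^o) l : u @ \oo --> l -> limn u = l.
Proof. by move=> h; apply: cvg_lim => //; exact: norm_hausdorff. Qed.

End Cvg.
Section Dmx.
Variable R : realType.
Local Open Scope classical_set_scope.
Variable d : nat.
Variable U : 'M[R[i]]_d.
Hypothesis hU1 : mxadj U *m U = 1%:M.
Hypothesis hU2 : U *m mxadj U = 1%:M.

Definition Dm (f : 'I_d -> R) : 'M[R[i]]_d := mxadj U *m diag_mx (\row_l (f l)%:C) *m U.

Lemma DmM f g : Dm f *m Dm g = Dm (fun l => f l * g l).
Proof.
rewrite /Dm !mulmxA -[mxadj U *m _ *m U *m mxadj U]mulmxA hU2 mulmx1.
rewrite -[mxadj U *m _ *m _]mulmxA mulmx_diag; congr (_ *m diag_mx _ *m _).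
by apply/rowP => l; rewrite !mxE rmorphM.
Qed.

Lemma Dm1 : Dm (fun _ => 1) = 1%:M.
Proof.
rewrite /Dm.
have -> : \row_l ((1 : R)%:C) = const_mx (1 : R[i]) :> 'rV_d.
  by apply/rowP => l; rewrite !mxE rmorph1.
by rewrite diag_const_mx mulmx1.
Qed.

Lemma DmZ a f : a%:C *: Dm f = Dm (fun l => a * f l).
Proof.
rewrite /Dm scalemxAl scalemxAr; congr (_ *m _ *m _).
by apply/matrixP => i j; rewrite !mxE rmorphM mulrnAr.
Qed.

Lemma DmD f g : Dm f + Dm g = Dm (fun l => f l + g l).
Proof.
rewrite /Dm -mulmxDl -mulmxDr; congr (_ *m _ *m _).
by apply/matrixP => i j; rewrite !mxE rmorphD mulrnDl.
Qed.

Lemma Dm0 : Dm (fun _ => 0) = 0.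
Proof.
rewrite /Dm.
have -> : diag_mx (\row_l ((0 : R)%:C)) = (0 : 'M[R[i]]_d).
  by apply/matrixP => i j; rewrite !mxE rmorph0 mul0rn.
by rewrite mulmx0 mul0mx.
Qed.

Lemma Dm_sum (I : Type) (s : seq I) (F : I -> 'I_d -> R) :
  \sum_(k <- s) Dm (F k) = Dm (fun l => \sum_(k <- s) F k l).
Proof.
elim: s => [|k s IH]; first by rewrite big_nil -Dm0; congr Dm; apply: boolp.funext => l; rewrite big_nil.
rewrite big_cons IH DmD; congr Dm; apply: boolp.funext => l; by rewrite big_cons.
Qed.

Lemma DmE f i j : Dm f i j = \sum_l (mxadj U i l * (f l)%:C) * U l j.
Proof.
rewrite /Dm mxE; apply: eq_bigr => l _; by rewrite mul_mx_diag !mxE.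
Qed.

Lemma mxpow_Dm c r k : mxpow (c%:C *: Dm r) k = Dm (fun l => (c * r l) ^+ k).
Proof.
elim: k => [|k IH].
  have -> : mxpow (c%:C *: Dm r) 0 = 1%:M by [].
  by rewrite -Dm1; congr Dm; apply: boolp.funext => l; rewrite expr0.
rewrite /mxpow iterS -/(mxpow _ _) IH DmZ DmM; congr Dm; apply: boolp.funext => l.
by rewrite exprS.
Qed.

Lemma cvg_sum_seq (I : Type) (s : seq I) (F : I -> nat -> (R[i])^o) (L : I -> (R[i])^o) :
  (forall l, F l @ \oo --> L l) ->
  (fun N => \sum_(l <- s) F l N) @ \oo --> \sum_(l <- s) L l.
Proof.
move=> h; elim: s => [|k s IH].
  rewrite big_nil; under eq_fun do rewrite big_nil; exact: cvg_cst.
rewrite big_cons; under eq_fun do rewrite big_cons.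
exact: (cvgD (h k) IH).
Qed.

Lemma expm_Dm c r : expm (c%:C *: Dm r) = Dm (fun l => expR (c * r l)).
Proof.
apply/matrixP => i j; rewrite mxE DmE.
apply: limn_ext_cvg.
have -> : (fun N : nat => ((\sum_(k < N) (k`!%:R)^-1 *: mxpow (c%:C *: Dm r) k) i j : (R[i])^o))
   = (fun N => \sum_l ((mxadj U i l * (series (exp_coeff (c * r l)) N)%:C) * U l j : (R[i])^o)).
  apply: boolp.funext => N.
  under eq_bigr do rewrite mxpow_Dm.
  have -> : \sum_(k < N) (k`!%:R)^-1 *: Dm (fun l => (c * r l) ^+ k)
         = \sum_(k < N) Dm (fun l => (k`!%:R)^-1 * (c * r l) ^+ k).
    apply: eq_bigr => k _; rewrite -DmZ; congr (_ *: _).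
    by rewrite fmorphV rmorph_nat.
  rewrite Dm_sum DmE; apply: eq_bigr => l _; congr (_ * (_)%:C * _).
  by rewrite /series /= big_mkord exp_coeffE.
apply: cvg_sum_seq => l.
apply: cvgM; last exact: cvg_cst.
apply: cvgM; first exact: cvg_cst.
apply: cvg_RC.
exact: is_cvg_series_exp_coeff.
Qed.

End Dmx.
Section Gibbs.
Variable R : realType.
Variable d : nat.
Notation mx := 'M[R[i]]_d.

Lemma mxadj_Dm (U : mx) f : mxadj (Dm U f) = Dm U f.
Proof.
rewrite /Dm !mxadj_mul mxadjK mulmxA; congr (_ *m _ *m _).
apply/matrixP => i j; rewrite !mxE.
case: (boolP (i == j)) => [/eqP ->|nij]; first by rewrite eqxx !mulr1n conjc_real.
by rewrite eq_sym (negbTE nij) !mulr0n conjc0.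
Qed.

Lemma tr_Dm (U : mx) f : U *m mxadj U = 1%:M -> \tr (Dm U f) = (\sum_l f l)%:C.
Proof.
move=> hU2; rewrite /Dm mxtrace_mulC mulmxA hU2 mul1mx mxtrace_diag rmorph_sum.
by apply: eq_bigr => l _; rewrite mxE.
Qed.

Lemma gibbs_facts (H : mx) (beta s : R) : herm_mx H -> (0 < d)%N ->
  gibbs_pow H beta s *m gibbs_pow H beta (1 - s) = gibbs H beta /\
  mxadj (gibbs H beta) = gibbs H beta.
Proof.
move=> hH d0.
have [U [r [hU1 hU2 HE]]] := herm_decomp hH.
have HD : H = Dm U r by [].
have eH c : expm (c%:C *: H) = Dm U (fun l => expR (c * r l)) by rewrite HD expm_Dm.
set Z := \sum_l expR (- beta * r l).
have Z0 : 0 < Z.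
  rewrite /Z (bigD1 (Ordinal d0)) //= ltr_pwDl ?expR_gt0 //.
  by apply: sumr_ge0 => l _; apply: ltW; apply: expR_gt0.
have ZE : gibbsZ H beta = Z%:C.
  by rewrite /gibbsZ -rmorphN eH tr_Dm.
have gE : gibbs H beta = Dm U (fun l => Z^-1 * expR (- beta * r l)).
  by rewrite /gibbs -rmorphN eH ZE -fmorphV DmZ.
have gpE a : gibbs_pow H beta a = Dm U (fun l => (Z `^ a)^-1 * expR (- (a * beta) * r l)).
  by rewrite /gibbs_pow ZE /= -rmorphN eH DmZ.
split; last by rewrite gE mxadj_Dm.
rewrite !gpE gE DmM //; congr Dm; apply: boolp.funext => l.
rewrite mulrACA -invfM -powRD; last by rewrite (gt_eqF Z0) implybT.
rewrite -expRD (_ : s + (1 - s) = 1) ?powRr1 ?ltW //; last by rewrite addrC subrK.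
congr (_ * expR _).
by rewrite -mulrDl -opprD -mulrDl addrC subrK mul1r.
Qed.
End Gibbs.
Section Lin.
Variable R : realType.
Variable d : nat.
Notation mx := 'M[R[i]]_d.
Notation C := R[i].

Definition linf (f : mx -> mx) := forall (a : C) X Y, f (a *: X + Y) = a *: f X + f Y.

Lemma linf0 f : linf f -> f 0 = 0.
Proof.
move=> h; have := h 1 0 0; rewrite scaler0 addr0 scale1r => e.
by apply/esym/(@addrI _ (f 0)); rewrite addr0 -e.
Qed.

Lemma linfD f : linf f -> forall X Y, f (X + Y) = f X + f Y.
Proof. by move=> h X Y; have := h 1 X Y; rewrite !scale1r. Qed.

Lemma linfZ f : linf f -> forall a X, f (a *: X) = a *: f X.
Proof. by move=> h a X; rewrite -[a *: X]addr0 h (linf0 h) addr0. Qed.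

Lemma linf_sum f (I : Type) (s : seq I) (a : I -> C) (X : I -> mx) : linf f ->
  f (\sum_(k <- s) a k *: X k) = \sum_(k <- s) a k *: f (X k).
Proof.
move=> h; elim: s => [|k s IH]; first by rewrite !big_nil linf0.
by rewrite !big_cons h IH.
Qed.

Lemma linf_sum1 f (I : Type) (s : seq I) (X : I -> mx) : linf f ->
  f (\sum_(k <- s) X k) = \sum_(k <- s) f (X k).
Proof.
move=> h; elim: s => [|k s IH]; first by rewrite !big_nil linf0.
by rewrite !big_cons linfD // IH.
Qed.

Lemma lin_mxP f : linf f -> forall X, mxvec X *m lin_mx f = mxvec (f X).
Proof.
move=> h X.
rewrite mulmx_sum_row.
have -> : \sum_i mxvec X 0 i *: row i (lin_mx f)
   = \sum_i mxvec X 0 i *: mxvec (f (vec_mx (delta_mx 0 i))).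
  apply: eq_bigr => i _; congr (_ *: _); apply/rowP => j; rewrite !mxE //.
under eq_bigr do rewrite -linearZ /=.
rewrite -linear_sum /= -linf_sum //.
congr (mxvec (f _)).
under eq_bigr do rewrite -linearZ /=.
rewrite -linear_sum -row_sum_delta; exact: mxvecK.
Qed.

Lemma linf_comp f g : linf f -> linf g -> linf (fun X => f (g X)).
Proof. by move=> hf hg a X Y; rewrite hg hf. Qed.

Lemma linf_kraus a (K : 'I_a -> mx) : linf (kraus K).
Proof.
move=> c X Y; rewrite /kraus scaler_sumr -big_split; apply: eq_bigr => u _.
by rewrite mulmxDr mulmxDl -scalemxAr -scalemxAl.
Qed.

Lemma linf_kraus_adj a (K : 'I_a -> mx) : linf (kraus_adj K).
Proof.
move=> c X Y; rewrite /kraus_adj scaler_sumr -big_split; apply: eq_bigr => u _.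
by rewrite mulmxDr mulmxDl -scalemxAr -scalemxAl.
Qed.

Lemma linf_conj (A : mx) : linf (fun X => A *m X *m mxadj A).
Proof. by move=> c X Y; rewrite mulmxDr mulmxDl -scalemxAr -scalemxAl. Qed.

Lemma linf_Mhat m (O : 'I_m -> mx) (lab : 'I_m -> R) (v : C) : linf (Mhat_adj O lab v).
Proof.
move=> c X Y; rewrite /Mhat_adj scaler_sumr -big_split; apply: eq_bigr => u _.
by rewrite mulmxDr mulmxDl -scalemxAr -scalemxAl scalerDr !scalerA [c * _]mulrC.
Qed.

End Lin.
Section Corr.
Variable R : realType.
Variable d : nat.
Notation mx := 'M[R[i]]_d.
Notation C := R[i].
Notation N := (d * d)%N.
Notation LM := 'M[R[i]]_N.

Lemma tr_kraus a (K : 'I_a -> mx) X : trace_preserving K -> \tr (kraus K X) = \tr X.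
Proof.
move=> hK; rewrite /kraus raddf_sum /=.
under eq_bigr do rewrite mxtrace_mulC mulmxA.
by rewrite -raddf_sum /= -mulmx_suml hK mul1mx.
Qed.

Lemma kraus_adj1 a (K : 'I_a -> mx) : trace_preserving K -> kraus_adj K 1%:M = 1%:M.
Proof.
move=> hK; rewrite /kraus_adj; under eq_bigr do rewrite mulmx1; exact: hK.
Qed.

Lemma tr_kraus_dual a (K : 'I_a -> mx) X B : \tr (kraus K X *m B) = \tr (X *m kraus_adj K B).
Proof.
rewrite /kraus /kraus_adj. rewrite mulmx_suml mulmx_sumr !raddf_sum /=; apply: eq_bigr => u _.
by rewrite -!mulmxA mxtrace_mulC !mulmxA.
Qed.

Lemma tr_conj_dual (A : mx) X B : \tr ((A *m X *m mxadj A) *m B) = \tr (X *m (mxadj A *m B *m A)).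
Proof. by rewrite -!mulmxA mxtrace_mulC !mulmxA. Qed.

Variables (a m : nat) (KN : 'I_a -> mx) (O : 'I_m -> mx).

Definition Lstep (e : 'I_m) : LM := lin_mx (traj_step KN O e).

Lemma linf_step e : linf (traj_step KN O e).
Proof. exact: (linf_comp (linf_kraus O) (linf_comp (linf_kraus KN) (linf_conj (O e)))). Qed.

Lemma traj_lin es X : mxvec (traj KN O es X) = mxvec X *m \prod_(e <- es) Lstep e.
Proof.
elim: es X => [|e es IH] X; first by rewrite big_nil -idmxE mulmx1.
rewrite big_cons /traj /= -/(traj KN O es _) IH -mulmxE mulmxA.
by rewrite /Lstep (lin_mxP (linf_step _)).
Qed.

Lemma prod_scal (I : Type) (s : seq I) (w : I -> C) (B : I -> LM) :
  \prod_(i <- s) ((w i)%:M * B i) = (\prod_(i <- s) w i)%:M * \prod_(i <- s) B i.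
Proof.
elim: s => [|k s IH]; first by rewrite !big_nil -mulmxE -idmxE mul1mx.
rewrite !big_cons IH -!mulmxE scalar_mxM !mulmxA; congr (_ *m _).
by rewrite -!mulmxA scalar_mxC.
Qed.

Variable rho : mx.
Definition Tf (M : LM) : C := \tr (vec_mx (mxvec rho *m M)).

Lemma TfD A B : Tf (A + B) = Tf A + Tf B.
Proof. by rewrite /Tf mulmxDr linearD /= mxtraceD. Qed.

Lemma Tf0 : Tf 0 = 0.
Proof. by rewrite /Tf mulmx0 linear0 mxtrace0. Qed.

Lemma TfZ c A : Tf (c%:M * A) = c * Tf A.
Proof. by rewrite /Tf -mulmxE mul_scalar_mx -scalemxAr linearZ /= mxtraceZ. Qed.

Lemma Tf_sum (I : Type) (s : seq I) (F : I -> LM) : Tf (\sum_(i <- s) F i) = \sum_(i <- s) Tf (F i).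
Proof.
elim: s => [|k s IH]; first by rewrite !big_nil Tf0.
by rewrite !big_cons TfD IH.
Qed.

End Corr.
Section CorrMain.
Variable R : realType.
Variable d : nat.
Notation mx := 'M[R[i]]_d.
Notation C := R[i].
Notation N := (d * d)%N.
Notation LM := 'M[R[i]]_N.
Variables (a m : nat) (KN : 'I_a -> mx) (O : 'I_m -> mx) (lab : 'I_m -> R) (v : C).

Definition Ef (X : mx) := kraus O (kraus KN (kraus O X)).
Definition Ehat (X : mx) := \sum_e ((lab e)%:C - v) *: traj_step KN O e X.
Definition LE : LM := \sum_e (1 : C)%:M * Lstep KN O e.
Definition Lh : LM := \sum_e ((lab e)%:C - v)%:M * Lstep KN O e.

Lemma sum_step X : \sum_e traj_step KN O e X = Ef X.
Proof.
rewrite /Ef /traj_step -linf_sum1; last exact: linf_kraus.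
by rewrite -linf_sum1 //; exact: linf_kraus.
Qed.

Lemma VE X : mxvec X *m LE = mxvec (Ef X).
Proof.
rewrite /LE mulmx_sumr -sum_step linear_sum /=; apply: eq_bigr => e _.
by rewrite -mulmxE mul1mx (lin_mxP (linf_step _ _ _)).
Qed.

Lemma VLh X : mxvec X *m Lh = mxvec (Ehat X).
Proof.
rewrite /Lh mulmx_sumr /Ehat linear_sum /=; apply: eq_bigr => e _.
by rewrite -mulmxE mul_scalar_mx -scalemxAr (lin_mxP (linf_step _ _ _)) linearZ.
Qed.

Lemma VEpow k X : mxvec X *m LE ^+ k = mxvec (iter k Ef X).
Proof.
elim: k X => [|k IH] X; first by rewrite expr0 -idmxE mulmx1.
by rewrite exprS -mulmxE mulmxA VE IH -iterSr.
Qed.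

Lemma tr_Ef X : trace_preserving O -> trace_preserving KN -> \tr (Ef X) = \tr X.
Proof. by move=> hO hN; rewrite /Ef !tr_kraus. Qed.

Lemma tr_iter k X : trace_preserving O -> trace_preserving KN -> \tr (iter k Ef X) = \tr X.
Proof. by move=> hO hN; elim: k => //= k IH; rewrite tr_Ef. Qed.

Lemma prod_const_range (F : nat -> LM) x i j :
  (forall k, (i <= k < j)%N -> F k = x) -> \prod_(i <= k < j) F k = x ^+ (j - i).
Proof. by move=> h; rewrite -prodr_const_nat; apply: eq_big_nat. Qed.

Lemma iter_fix k (X : mx) : Ef X = X -> iter k Ef X = X.
Proof. by move=> h; elim: k => [//|k IH]; rewrite iterS IH h. Qed.

Lemma ar1 k t p : (0 <= k < t)%N -> (k == t) = false /\ (k == t + p.+1)%N = false.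
Proof. by move=> /andP[h1 h2]; split; apply/eqP; lia. Qed.
Lemma ar2 k t p : (t.+1 <= k < t + p.+1)%N -> (k == t) = false /\ (k == t + p.+1)%N = false.
Proof. by move=> /andP[h1 h2]; split; apply/eqP; lia. Qed.
Lemma ar3 k t p K : ((t + p.+1).+1 <= k < K)%N -> (k == t) = false /\ (k == t + p.+1)%N = false.
Proof. by move=> /andP[h1 h2]; split; apply/eqP; lia. Qed.

Lemma corr_expand (rho : mx) (K t p : nat) :
  trace_preserving O -> trace_preserving KN -> Ef rho = rho ->
  (0 < t)%N -> (0 < p)%N -> (t + p <= K)%N ->
  corr KN O lab rho v K t p = \tr (Ehat (iter p.-1 Ef (Ehat rho))).
Proof.
move=> hO hN hfix.
case: t => [//|t] _; case: p => [//|p] _ hK /=.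
have ht1 : (t < K)%N by apply: leq_trans hK; rewrite ltn_addr.
have ht2 : (t + p.+1 < K)%N by lia.
set t1 := Ordinal ht1; set t2 := Ordinal ht2.
pose g e := (lab e)%:C - v.
pose W (i : 'I_K) e : C := if (i : nat) == t then g e else if (i : nat) == (t + p.+1)%N then g e else 1.
have step1 : corr KN O lab rho v K t.+1 p.+1 =
   \sum_(f : {ffun 'I_K -> 'I_m}) Tf rho (\prod_i ((W i (f i))%:M * Lstep KN O (f i))).
  rewrite /corr; apply: eq_bigr => f _ /=.
  rewrite prod_scal TfZ.
  have -> : \prod_i W i (f i) = g (f t1) * g (f t2).
    have t21 : t2 != t1 by rewrite -val_eqE /=; apply/eqP; lia.
    rewrite (bigD1 t1) //= (bigD1 t2) //=.
    rewrite /W /= eqxx (_ : (t + p.+1 == t)%N = false); last by apply/eqP; lia.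
    rewrite eqxx big1 ?mulr1 // => i /andP[ne2 ne1].
    have n1 : (i : nat) != t by [].
    have n2 : (i : nat) != (t + p.+1)%N by [].
    by rewrite (negbTE n1) (negbTE n2).
  have nthE (j : 'I_K) : nth 0 [seq lab e | e <- [seq f i | i <- enum 'I_K]] j = lab (f j).
    rewrite -map_comp (nth_map j) ?size_enum_ord //=; congr (lab (f _)).
    by apply: val_inj; rewrite /= nth_enum_ord.
  rewrite (nthE t1) (nthE t2) /g; congr (_ * _).
  rewrite /Tf.
  have -> : \prod_i Lstep KN O (f i) = \prod_(e <- [seq f i | i <- enum 'I_K]) Lstep KN O e.
    by rewrite big_map enumT [index_enum _]unlock.
  by rewrite -traj_lin mxvecK.
rewrite step1 -Tf_sum.
rewrite -(bigA_distr_bigA (fun (i : 'I_K) (e : 'I_m) => (W i e)%:M * Lstep KN O e)) /=.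
pose Qn (k : nat) := if k == t then Lh else if k == (t + p.+1)%N then Lh else LE.
have hQ (i : 'I_K) : \sum_e (W i e)%:M * Lstep KN O e = Qn i.
  rewrite /W /Qn; case: ifP => _; first by [].
  by case: ifP.
under eq_bigr do rewrite hQ.
rewrite -(big_mkord xpredT Qn).
have hA : (t <= K)%N by lia.
have hB : (t <= t.+1)%N by lia.
have hC : (t.+1 <= K)%N by lia.
have hD : (t.+1 <= t + p.+1)%N by lia.
have hE : (t + p.+1 <= K)%N by lia.
have hF : (t + p.+1 <= (t + p.+1).+1)%N by lia.
have hG : ((t + p.+1).+1 <= K)%N by lia.
rewrite (big_cat_nat (leq0n t) hA) (big_cat_nat hB hC) (big_cat_nat hD hE) (big_cat_nat hF hG).
rewrite !big_nat1.
have hQn k : (k == t) = false -> (k == t + p.+1)%N = false -> Qn k = LE.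
  by move=> h1 h2; rewrite /Qn h1 h2.
rewrite (prod_const_range (x := LE)); last first.
  by move=> k hk; apply: hQn; [apply: (@ar1 k t p hk).1 | apply: (@ar1 k t p hk).2].
rewrite (prod_const_range (i := t.+1) (x := LE)); last first.
  by move=> k hk; apply: hQn; [apply: (@ar2 k t p hk).1 | apply: (@ar2 k t p hk).2].
rewrite (prod_const_range (i := (t + p.+1).+1) (x := LE)); last first.
  by move=> k hk; apply: hQn; [apply: (@ar3 k t p K hk).1 | apply: (@ar3 k t p K hk).2].
rewrite /Qn eqxx (_ : (t + p.+1 == t)%N = false); last by apply/eqP; lia.
rewrite eqxx subn0 (_ : (t + p.+1 - t.+1 = p)%N); last by lia.
rewrite /Tf [X in vec_mx X]/= -!mulmxE !mulmxA VEpow iter_fix // VLh VEpow VLh VEpow mxvecK tr_iter //.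
Qed.
End CorrMain.
Section Basis.
Variable R : realType.
Variable d : nat.
Notation mx := 'M[R[i]]_d.
Notation C := R[i].
Notation N := (d * d)%N.

Lemma dot_mxvec (A B : mx) :
  \sum_(c < N) mxvec A 0 c * mxvec B 0 c = \tr (trmx B *m A).
Proof.
rewrite (reindex (uncurry (@mxvec_index d d))) /=; last first.
  exact: onW_bij (onT_bij (curry_mxvec_bij d d)).
rewrite (eq_bigr (fun p : 'I_d * 'I_d => mxvec A 0 (mxvec_index p.1 p.2) * mxvec B 0 (mxvec_index p.1 p.2))); last by move=> [a b].
rewrite -(pair_bigA _ (fun a b => mxvec A 0 (mxvec_index a b) * mxvec B 0 (mxvec_index a b))) /=.
rewrite exchange_big /mxtrace; apply: eq_bigr => b _; rewrite mxE; apply: eq_bigr => a _.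
by rewrite !mxvecE !mxE mulrC.
Qed.

Lemma basis_expand (Y : 'I_N -> mx) (W : mx -> mx) (ip : mx -> mx -> C) :
  (forall A X, ip A X = \tr (W A *m X)) ->
  (forall i j, ip (Y i) (Y j) = (i == j)%:R) ->
  forall X, X = \sum_j ip (Y j) X *: Y j.
Proof.
move=> hW hY X.
pose B : 'M[C]_N := \matrix_(k, c) mxvec (Y k) 0 c.
pose Cm : 'M[C]_N := \matrix_(c, j) mxvec (trmx (W (Y j))) 0 c.
have hdot (Z : mx) j : \sum_c mxvec Z 0 c * mxvec (trmx (W (Y j))) 0 c = ip (Y j) Z.
  by rewrite dot_mxvec trmxK hW.
have hBC : B *m Cm = 1%:M.
  apply/matrixP => k j; rewrite !mxE.
  under eq_bigr do rewrite !mxE.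
  by rewrite hdot hY eq_sym.
have hCB := mulmx1C hBC.
apply: (can_inj mxvecK).
rewrite -[mxvec X]mulmx1 -hCB mulmxA mulmx_sum_row linear_sum /=.
apply: eq_bigr => j _; rewrite linearZ /=; congr (_ *: _).
  rewrite mxE -hdot; apply: eq_bigr => c _; by rewrite mxE.
by apply/rowP => c; rewrite !mxE.
Qed.
End Basis.

Lemma conjcB (R : realType) (x y : R[i]) : conjc (x - y) = conjc x - conjc y.
Proof. exact: rmorphB. Qed.

Lemma conjcM' (R : realType) (x y : R[i]) : conjc (x * y) = conjc x * conjc y.
Proof. exact: rmorphM. Qed.

Lemma conj_sub_real (R : realType) (x : R) (w : R[i]) : w^* = w -> (x%:C - w)^* = x%:C - w.
Proof. by move=> h; rewrite conjcB h conjc_real. Qed.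

Lemma ip_form (R : realType) (d : nat) (G1 G2 A X : 'M[R[i]]_d) :
  \tr (mxadj A *m G1 *m X *m G2) = \tr ((G2 *m mxadj A *m G1) *m X).
Proof. by rewrite mxtrace_mulC !mulmxA. Qed.

Lemma ip_one (R : realType) (d : nat) (G1 G2 P : 'M[R[i]]_d) : G2 *m G1 = P ->
  forall X, \tr (mxadj 1%:M *m G1 *m X *m G2) = \tr (P *m X).
Proof. by move=> h X; rewrite mxadj1 mul1mx mxtrace_mulC mulmxA h. Qed.

Lemma conjc_sum (R : realType) (I : Type) (r : seq I) (F : I -> R[i]) :
  conjc (\sum_(i <- r) F i) = \sum_(i <- r) conjc (F i).
Proof. exact: rmorph_sum. Qed.

Lemma conj_real_tr (R : realType) (d : nat) (x : R) (T : 'M[R[i]]_d) :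
  mxadj T = T -> conjc (x%:C * \tr T) = x%:C * \tr T.
Proof. by move=> h; rewrite conjcM' conjc_real -mxtrace_adj h. Qed.

Lemma mhat_zero (R : realType) (d m : nat) (O : 'I_m -> 'M[R[i]]_d) (lab : 'I_m -> R)
  (rho : 'M[R[i]]_d) (v : R[i]) :
  trace_preserving O -> \tr rho = 1 -> conjc v = v -> v = expM O lab rho ->
  \tr (rho *m Mhat_adj O lab v 1%:M) = 0.
Proof.
move=> hO tr1 vr hv.
rewrite /Mhat_adj mulmx_sumr raddf_sum /=.
have t1 u : \tr (rho *m (conjc ((lab u)%:C - v) *: (mxadj (O u) *m 1%:M *m O u)))
   = (lab u)%:C * \tr (O u *m rho *m mxadj (O u)) - v * \tr (O u *m rho *m mxadj (O u)).
  rewrite -mulrBl.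
  transitivity (((lab u)%:C - v) * \tr (O u *m rho *m mxadj (O u))); last by [].
  rewrite -scalemxAr mxtraceZ mulmx1 mulmxA mxtrace_mulC mulmxA.
  by congr (_ * _); exact: conj_sub_real.
rewrite (eq_bigr _ (fun u _ => t1 u)) sumrB -mulr_sumr.
rewrite -/(expM O lab rho) -hv -raddf_sum /= -/(kraus O rho) tr_kraus // tr1 mulr1.
exact: subrr.
Qed.

Lemma final_sum (R : realType) (N : nat) (i0 : 'I_N) (c b : 'I_N -> R[i]) (lam : 'I_N -> R) k :
  c i0 = 0 ->
  \sum_j c j * (lam j)%:C ^+ k * b j = \sum_(j < N | j != i0) c j * b j * (lam j ^+ k)%:C.
Proof.
move=> h0; rewrite (bigD1 i0) //= h0 !mul0r add0r.
by apply: eq_big => [j //|j _]; rewrite rmorphXn mulrAC.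
Qed.

Section Heis.
Variable R : realType.
Variable d : nat.
Notation mx := 'M[R[i]]_d.
Notation C := R[i].
Variables (a m : nat) (KN : 'I_a -> mx) (O : 'I_m -> mx) (lab : 'I_m -> R) (v : C).

Definition Eadj (B : mx) := kraus_adj O (kraus_adj KN (kraus_adj O B)).
Definition Ahat (B : mx) := Mhat_adj O lab v (kraus_adj KN (kraus_adj O B)).

Lemma linf_Eadj : linf Eadj.
Proof. exact: (linf_comp (linf_kraus_adj O) (linf_comp (linf_kraus_adj KN) (linf_kraus_adj O))). Qed.

Lemma linf_Ahat : linf Ahat.
Proof. exact: (linf_comp (linf_Mhat O lab v) (linf_comp (linf_kraus_adj KN) (linf_kraus_adj O))). Qed.

Lemma dual_Ef X B : \tr (Ef KN O X *m B) = \tr (X *m Eadj B).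
Proof. by rewrite /Ef /Eadj !tr_kraus_dual. Qed.

Lemma dual_iter k X B : \tr (iter k (Ef KN O) X *m B) = \tr (X *m iter k Eadj B).
Proof.
elim: k X B => [//|k IH] X B.
by rewrite [in RHS]iterSr -IH iterS dual_Ef.
Qed.

Lemma dual_Ehat X B : v^* = v -> \tr (Ehat KN O lab v X *m B) = \tr (X *m Ahat B).
Proof.
move=> vr; rewrite /Ehat /Ahat /Mhat_adj mulmx_suml mulmx_sumr !raddf_sum /=.
apply: eq_bigr => e _; rewrite -scalemxAl -scalemxAr !mxtraceZ /traj_step !tr_kraus_dual tr_conj_dual.
by congr (_ * _); apply/esym; exact: conj_sub_real.
Qed.

Lemma iter_Eadj (lam : 'I_(d * d) -> R) (Y : 'I_(d * d) -> mx) (c : 'I_(d * d) -> C) k :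
  (forall i, Eadj (Y i) = (lam i)%:C *: Y i) ->
  iter k Eadj (\sum_j c j *: Y j) = \sum_j (c j * (lam j)%:C ^+ k) *: Y j.
Proof.
move=> hE; elim: k => [|k IH].
  by rewrite [iter 0 _ _]/=; apply: eq_bigr => j _; rewrite expr0 mulr1.
rewrite iterS IH linf_sum; last exact: linf_Eadj.
by apply: eq_bigr => j _; rewrite hE scalerA exprSr mulrA.
Qed.

End Heis.

Unset Implicit Arguments.
Set Strict Implicit.

Theorem lemma5p9 (R : realType) (n : nat)
  (H : 'M[R[i]]_(qdim n)) (beta s : R)
  (a : nat) (KN : 'I_a -> 'M[R[i]]_(qdim n))
  (m : nat) (O : 'I_m -> 'M[R[i]]_(qdim n)) (lab : 'I_m -> R)
  (Y : 'I_(qdim n * qdim n) -> 'M[R[i]]_(qdim n)) (lam : 'I_(qdim n * qdim n) -> R)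
  (K t p : nat) :
  herm_mx H -> 0 < beta -> 0 <= s <= 1 ->
  (* N: quantum channel, s-detailed balance, unique fixed state rho_beta, spectrum in [0,1] *)
  trace_preserving KN ->
  detailed_balance H beta s (kraus_adj KN) ->
  kraus KN (gibbs H beta) = gibbs H beta ->
  (forall X, density X -> kraus KN X = X -> X = gibbs H beta) ->
  (forall (z : R[i]) (X : 'M[R[i]]_(qdim n)), X != 0 -> kraus KN X = z *: X -> 0 <= z <= 1) ->
  (* M: quantum channel with Kraus operators indexed by distinct real outcomes, s-detailed balance *)
  injective lab ->
  trace_preserving O ->
  detailed_balance H beta s (kraus_adj O) ->
  (* {Y_i}: <.,.>_s-orthonormal eigenbasis of E^dag = M^dag N^dag M^dag *)
  (forall i j, ip_s H beta s (Y i) (Y j) = (i == j)%:R) ->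
  (forall i, kraus_adj O (kraus_adj KN (kraus_adj O (Y i))) = (lam i)%:C *: Y i) ->
  lam (idx0 n) = 1 ->
  (forall i, i != idx0 n -> lam i < 1) ->
  (forall i j : 'I_(qdim n * qdim n), (i <= j)%N -> lam j <= lam i) ->
  (forall i, 0 <= lam i) ->
  Y (idx0 n) = 1%:M ->
  (0 < t)%N -> (0 < p)%N -> (t + p <= K)%N ->
  let v := expM O lab (gibbs H beta) in
  let alpha i j := ip_s H beta s (Y j)
                     (Mhat_adj O lab v (kraus_adj KN (kraus_adj O (Y i)))) in
  corr KN O lab (gibbs H beta) v K t p =
  \sum_(j < qdim n * qdim n | j != idx0 n)
     alpha (idx0 n) j * alpha j (idx0 n) * ((lam j) ^+ p.-1)%:C.
Proof.
move=> hH _ _ hTPN _ hfixN _ _ _ hTPO hDBO hON hEig _ _ _ _ hY1 ht hp hK v alpha.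
rewrite /alpha; clear alpha.
have d0 : (0 < qdim n)%N by rewrite /qdim expn_gt0.
have [F1 hermrho] := gibbs_facts beta s hH d0.
have hWip : forall A X, ip_s H beta s A X =
    \tr ((gibbs_pow H beta s *m mxadj A *m gibbs_pow H beta (1 - s)) *m X).
  by move=> A X; exact: ip_form.
have ip1 : forall X, ip_s H beta s 1%:M X = \tr (gibbs H beta *m X).
  by move=> X; exact: (ip_one F1).
have hv : v = expM O lab (gibbs H beta) by [].
clearbody v.
move: hWip; set W := fun A => gibbs_pow H beta s *m mxadj A *m gibbs_pow H beta (1 - s) => hWip.
clearbody W.
rewrite /detailed_balance in hDBO.
set ip := ip_s H beta s in hWip ip1 hON hDBO *.
clearbody ip.
set rho := gibbs H beta in hermrho hfixN ip1 hv *.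
clearbody rho.
clear F1.
have trrho : \tr rho = 1.
  by have := hON (idx0 n) (idx0 n); rewrite hY1 ip1 mulmx1 eqxx.
have hOfix : kraus O rho = rho.
  apply: trace_inj => X.
  by rewrite tr_kraus_dual -ip1 hDBO (kraus_adj1 hTPO) ip1.
have hEf : Ef KN O rho = rho by rewrite /Ef hOfix hfixN hOfix.
have vreal : v^* = v.
  rewrite hv /expM conjc_sum; apply: eq_bigr => u _.
  apply: conj_real_tr.
  by rewrite !mxadj_mul mxadjK hermrho mulmxA.
rewrite (corr_expand lab v hTPO hTPN hEf ht hp hK).
rewrite -[X in \tr X]mulmx1 dual_Ehat // dual_iter dual_Ehat //.
have hexp := basis_expand hWip hON.
have e1 : Ahat KN O lab v 1%:M = \sum_j ip (Y j) (Mhat_adj O lab v (kraus_adj KN (kraus_adj O (Y (idx0 n))))) *: Y j.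
  by rewrite -hY1; exact: hexp.
rewrite e1 (iter_Eadj _ _ hEig) linf_sum; last exact: linf_Ahat.
rewrite mulmx_sumr raddf_sum /=.
have e2 j : \tr (rho *m ((ip (Y j) (Mhat_adj O lab v (kraus_adj KN (kraus_adj O (Y (idx0 n))))) * (lam j)%:C ^+ p.-1) *: Ahat KN O lab v (Y j)))
    = ip (Y j) (Mhat_adj O lab v (kraus_adj KN (kraus_adj O (Y (idx0 n))))) * (lam j)%:C ^+ p.-1 * ip (Y (idx0 n)) (Ahat KN O lab v (Y j)).
  by rewrite -scalemxAr mxtraceZ -ip1 -hY1.
under eq_bigr do rewrite e2.
have a00 : ip (Y (idx0 n)) (Mhat_adj O lab v (kraus_adj KN (kraus_adj O (Y (idx0 n))))) = 0.
  rewrite hY1 ip1 (kraus_adj1 hTPO) (kraus_adj1 hTPN).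
  exact: (mhat_zero hTPO trrho vreal hv).
apply: final_sum; exact: a00.
Qed.
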